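(* Let $\mathcal C$ be a Clifford circuit with linear outcome code $\mathcal O(\mathcal C)$ and let $u\in\mathcal O(\mathcal C)^\perp$ be nonzero. Let $\ell_u$ (resp. $\ell_u'$) be the minimum (resp. maximum) of $\ell_j$ over $j$ with $u_j=1$. If $\ell<\ell_u$ or $\ell\ge\ell_u'$ (with $0\le\ell\le\Delta$), then $\overleftarrow{F(u)}_{\ell+0.5}=I$.
   Context: A Clifford circuit on $n$ qubits is a finite sequence of operations, each a unitary Clifford gate or the measurement of a Hermitian $n$-qubit Pauli, each with a level in $\{1,2,\dots\}$; operations of equal level have disjoint supports and levels are nondecreasing; depth $\Delta$ = maximal level. In circuit order the $j$-th measurement measures $S_j$ at level $\ell_j$ ($j=1,\dots,m$); outcome $o_j=0$ for eigenvalue $+1$, $1$ for $-1$. The outcome code $\mathcal O(\mathcal C)$ is the set of outcome bit-strings occurring with nonzero probability for some input state; $\perp$ refers to $(u|v)=\sum u_iv_i\bmod2$. $\overline{\mathcal P}_N$ is the $N$-qubit Pauli group modulo phases. $U_\ell$ is the product of unitary gates of level $\ell$ (identity if none). Fault operators $F\in\overline{\mathcal P}_{n(\Delta+1)}$ act on qubits $(\ell+0.5,q)$, $0\le\ell\le\Delta$, $1\le q\le n$, with level components $F_{\ell+0.5}$; $\eta_{\ell+0.5}(P)$ is $P$ at level $\ell+0.5$ and $I$ elsewhere. Back-cumulant $\overleftarrow F$: start with $F$; for $\ell=\Delta,\dots,1$ replace $\overleftarrow F_{\ell-0.5}$ by $\overleftarrow F_{\ell-0.5}\cdot U_\ell^{-1}\overleftarrow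 F_{\ell+0.5}U_\ell$. $F(u)=\prod_j\eta_{\ell_j-0.5}(S_j^{u_j})$. *)

(* Defs.v *)
From HB Require Import structures.
From mathcomp Require Import all_boot all_order all_algebra.
From mathcomp Require Import algC.
Set Implicit Arguments. Unset Strict Implicit. Unset Printing Implicit Defensive.
Import Order.TTheory GRing.Theory Num.Theory.
Local Open Scope ring_scope.

Section Clifford.
Variable n : nat.

(* n-qubit operators: matrices on the computational basis |x>, x < 2^n;
   qubit q of basis index x is bit q of x. *)
Definition Op := 'M[algC]_(2 ^ n).

Definition bit (q x : nat) : bool := odd (x %/ 2 ^ q)%N.
Definition flip (q x : nat) : nat := if bit q x then (x - 2 ^ q)%N else (x + 2 ^ q)%N.

Definition pX (q : 'I_n) : Op := \matrix_(x, y) ((val x == flip q y)%:R).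
Definition pZ (q : 'I_n) : Op :=
  \matrix_(x, y) ((x == y)%:R * (-1) ^+ bit q x).

Definition paulimat (a b : {ffun 'I_n -> bool}) : Op :=
  foldr (fun q acc => (if a q then pX q else 1%:M) *m (if b q then pZ q else 1%:M) *m acc)
        1%:M (enum 'I_n).

Definition pauli_group (P : Op) : Prop :=
  exists (k : 'I_4) (a b : {ffun 'I_n -> bool}), P = ('i ^+ k) *: paulimat a b.

Definition adj (A : Op) : Op := (map_mx Num.conj A)^T.

Definition hermitian_pauli (S : Op) : Prop := pauli_group S /\ adj S = S.

Definition unitary (U : Op) : Prop := adj U *m U = 1%:M.

Definition clifford (U : Op) : Prop :=
  unitary U /\ forall P, pauli_group P -> pauli_group (U *m P *m adj U).

(* A acts trivially on qubit q, i.e. A = I_q (x) B (entrywise form) *)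
Definition agree_off (q : 'I_n) (x x' : 'I_(2 ^ n)) : Prop :=
  forall r : 'I_n, r != q -> bit r x = bit r x'.
Definition trivial_on (q : 'I_n) (A : Op) : Prop :=
  forall x y : 'I_(2 ^ n),
    (bit q x != bit q y -> A x y = 0) /\
    (forall x' y' : 'I_(2 ^ n), agree_off q x x' -> agree_off q y y' ->
        bit q x = bit q y -> bit q x' = bit q y' -> A x y = A x' y').
(* qubit q is in the support of A iff ~ trivial_on q A *)

Inductive op := Gate of Op | Meas of Op.
Definition op_mat (o : op) : Op := match o with Gate U => U | Meas Sm => Sm end.

(* A Clifford circuit: a sequence of (level, operation) pairs in circuit order *)
Definition circuit := seq (nat * op).

Definition dflt : nat * op := (0%N, Gate 1%:M).

Definition wf_circuit (c : circuit) : Prop :=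
  [/\ forall i, (i < size c)%N -> (1 <= (nth dflt c i).1)%N,
      sorted leq (map fst c),
      forall i j, (i < j < size c)%N -> (nth dflt c i).1 = (nth dflt c j).1 ->
        forall q, trivial_on q (op_mat (nth dflt c i).2) \/
                  trivial_on q (op_mat (nth dflt c j).2)
    & forall i, (i < size c)%N ->
        match (nth dflt c i).2 with
        | Gate U => clifford U
        | Meas Sm => hermitian_pauli Sm
        end].

Definition depth (c : circuit) : nat := \max_(p <- c) p.1.

(* measurements in circuit order: (level l_j, Pauli S_j) *)
Definition meas_list (c : circuit) : seq (nat * Op) :=
  pmap (fun p => if p.2 is Meas Sm then Some (p.1, Sm) else None) c.
Definition nmeas (c : circuit) : nat := size (meas_list c).
Definition mlev (c : circuit) (j : nat) : nat := (nth (0%N, 1%:M) (meas_list c) j).1.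
Definition mop (c : circuit) (j : nat) : Op := (nth (0%N, 1%:M) (meas_list c) j).2.

Definition proj (o : bool) (S : Op) : Op := 2^-1 *: (1%:M + ((-1) ^+ o) *: S).

(* Kraus operator of the circuit for outcome assignment f (k = index of the
   next measurement); later operations act on the left *)
Fixpoint kraus (c : circuit) (f : nat -> bool) (k : nat) : Op :=
  match c with
  | [::] => 1%:M
  | (_, Gate U) :: c' => kraus c' f k *m U
  | (_, Meas Sm) :: c' => kraus c' f k.+1 *m proj (f k) Sm
  end.

Definition bits_of (m : nat) (o : {ffun 'I_m -> bool}) (j : nat) : bool :=
  if insub j is Some i then o i else false.

(* outcome code: outcome strings with nonzero probability for some input state *)
Definition outcome_code (c : circuit) (o : {ffun 'I_(nmeas c) -> bool}) : Prop :=
  exists psi : 'cV[algC]_(2 ^ n), kraus c (bits_of o) 0 *m psi != 0.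

Definition bxor (m : nat) (o1 o2 : {ffun 'I_m -> bool}) : {ffun 'I_m -> bool} :=
  [ffun j => o1 j (+) o2 j].

Definition linear_code (m : nat) (C : {ffun 'I_m -> bool} -> Prop) : Prop :=
  C [ffun => false] /\ forall o1 o2, C o1 -> C o2 -> C (bxor o1 o2).

Definition bdot (m : nat) (u v : {ffun 'I_m -> bool}) : bool :=
  odd (\sum_(j < m) (u j && v j)).

Definition in_perp (m : nat) (C : {ffun 'I_m -> bool} -> Prop) (u : {ffun 'I_m -> bool}) :=
  forall o, C o -> bdot u o = false.

Definition Ulev (c : circuit) (l : nat) : Op :=
  foldl (fun acc p => if p.2 is Gate U then (if p.1 == l then U *m acc else acc) else acc)
        1%:M c.

(* component at level k+0.5 of F(u): product of S_j with u_j = 1 and l_j - 0.5 = k + 0.5 *)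
Definition Fcomp (c : circuit) (u : {ffun 'I_(nmeas c) -> bool}) (k : nat) : Op :=
  foldr (fun j acc => (if u j && (mlev c j == k.+1) then mop c j else 1%:M) *m acc)
        1%:M (enum 'I_(nmeas c)).

(* back-cumulant: bc_aux d is the component at level (depth - d) + 0.5 *)
Fixpoint bc_aux (c : circuit) (u : {ffun 'I_(nmeas c) -> bool}) (d : nat) : Op :=
  match d with
  | 0 => Fcomp u (depth c)
  | d'.+1 => Fcomp u (depth c - d) *m
             (invmx (Ulev c (depth c - d')) *m bc_aux u d' *m Ulev c (depth c - d'))
  end.

Definition back_cumulant (c : circuit) (u : {ffun 'I_(nmeas c) -> bool}) (l : nat) : Op :=
  bc_aux u (depth c - l).

Definition lev_min (c : circuit) (u : {ffun 'I_(nmeas c) -> bool}) : nat :=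
  \big[minn/(depth c).+1]_(j < nmeas c | u j) mlev c j.
Definition lev_max (c : circuit) (u : {ffun 'I_(nmeas c) -> bool}) : nat :=
  \max_(j < nmeas c | u j) mlev c j.

Definition is_identity_mod_phase (P : Op) : Prop := exists z : algC, P = z%:M.

End Clifford.

(* Main.v *)
Require Import Defs.
From mathcomp Require Import all_boot all_order all_algebra algC.
From mathcomp Require Import zify.
From Stdlib Require Import ClassicalEpsilon.
Set Implicit Arguments. Unset Strict Implicit. Unset Printing Implicit Defensive.
Import Order.TTheory GRing.Theory Num.Theory.
Local Open Scope ring_scope.

Section Bits.
Local Open Scope nat_scope.

Fixpoint mk (f : nat -> bool) (m : nat) : nat :=
  if m is m'.+1 then (f 0%N + (mk (fun r => f r.+1) m').*2)%N else 0%N.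

Lemma bit0n x : bit 0 x = odd x.
Proof. by rewrite /bit expn0 divn1. Qed.

Lemma bitSn r x : bit r.+1 x = bit r x./2.
Proof. by rewrite /bit expnS divnMA divn2. Qed.

Lemma bit_of0 r : bit r 0 = false.
Proof. by rewrite /bit div0n. Qed.

Lemma mk_lt f m : (mk f m < 2 ^ m)%N.
Proof.
elim: m f => [//|m IH] f /=; have := IH (fun r => f r.+1); rewrite expnS -muln2.
case: (f 0%N) => /=; lia.
Qed.

Lemma bit_mk f m r : bit r (mk f m) = (r < m)%N && f r.
Proof.
elim: m f r => [|m IH] f r /=; first by rewrite bit_of0.
case: r => [|r].
  by rewrite bit0n oddD odd_double addbF; case: (f 0%N).
by rewrite bitSn half_bit_double IH.
Qed.

Lemma bits_eq m x y : (x < 2 ^ m)%N -> (y < 2 ^ m)%N ->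
  (forall r, (r < m)%N -> bit r x = bit r y) -> x = y.
Proof.
elim: m x y => [|m IH] x y.
  by rewrite expn0 !ltnS !leqn0 => /eqP -> /eqP ->.
move=> hx hy h.
have hx2 : (x./2 < 2 ^ m)%N.
  move: hx; rewrite expnS -{1}(odd_double_half x) -muln2; case: (odd x) => /=; lia.
have hy2 : (y./2 < 2 ^ m)%N.
  move: hy; rewrite expnS -{1}(odd_double_half y) -muln2; case: (odd y) => /=; lia.
have e2 : x./2 = y./2.
  apply: IH => // r hr; rewrite -!bitSn; exact: h.
have e1 : odd x = odd y by rewrite -!bit0n; exact: h.
by rewrite -(odd_double_half x) -(odd_double_half y) e1 e2.
Qed.

Lemma bit_big m x r : (x < 2 ^ m)%N -> (m <= r)%N -> bit r x = false.
Proof.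
move=> hx hr; rewrite /bit divn_small //; apply: leq_trans hx _.
by rewrite leq_exp2l.
Qed.

Lemma bit_set_ge q x : bit q x -> (2 ^ q <= x)%N.
Proof.
rewrite /bit; case: (ltnP x (2 ^ q)) => // h; by rewrite divn_small.
Qed.

Lemma bit_addq q x : bit q (x + 2 ^ q) = ~~ bit q x.
Proof.
rewrite /bit addnC -{1}(mul1n (2 ^ q)) divnMDl ?expn_gt0 //.

Qed.

Lemma bit_subq q x : (2 ^ q <= x)%N -> bit q (x - 2 ^ q) = ~~ bit q x.
Proof.
move=> h; rewrite -{2}(subnK h) bit_addq negbK //.
Qed.

Lemma flipK q x : flip q (flip q x) = x.
Proof.
rewrite /flip; case hb: (bit q x).
  rewrite bit_subq ?bit_set_ge // hb /=; by rewrite subnK // bit_set_ge.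
by rewrite bit_addq hb /= addnK.
Qed.

Lemma flip_lt m q x : (q < m)%N -> (x < 2 ^ m)%N -> (flip q x < 2 ^ m)%N.
Proof.
move=> hq hx; rewrite /flip; case hb: (bit q x).
  exact: leq_ltn_trans (leq_subr _ _) hx.
have hd : (0 < 2 ^ q)%N by rewrite expn_gt0.
have e : (2 ^ m = 2 ^ (m - q) * 2 ^ q)%N by rewrite -expnD subnK // ltnW.
have ha : (x %/ 2 ^ q < 2 ^ (m - q))%N by rewrite ltn_divLR // -e.
have ev : ~~ odd (2 ^ (m - q)).
  by rewrite oddX orbF subn_eq0 -ltnNge.
have ha2 : ((x + 2 ^ q) %/ 2 ^ q < 2 ^ (m - q))%N.
  rewrite addnC -{1}(mul1n (2 ^ q)) divnMDl // add1n.
  rewrite ltn_neqAle ha andbT; apply/negP => /eqP e2.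
  move: ev; rewrite -e2 /=; move: hb; rewrite /bit => ->.
  by [].
by rewrite ltn_divLR // -e in ha2.
Qed.
End Bits.

Section Adj.
Variable n : nat.
Local Notation M := 'M[algC]_(2 ^ n).
Lemma adjM (A B : M) : adj (A *m B) = adj B *m adj A.
Proof. by rewrite /adj map_mxM trmx_mul. Qed.

Lemma adj1 : adj (1%:M : M) = 1%:M.
Proof. by rewrite /adj map_mx1 trmx1. Qed.

Lemma adjK (A : M) : adj (adj A) = A.
Proof.
apply/matrixP => i j; rewrite /adj !mxE; exact: conjCK.
Qed.

Lemma adjZ a (A : M) : adj (a *: A) = a^* *: adj A.
Proof. apply/matrixP => i j; by rewrite /adj !mxE rmorphM. Qed.

Lemma unitary1 : unitary (1%:M : M).
Proof. by rewrite /unitary adj1 mulmx1. Qed.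

Lemma unitaryM (A B : M) : unitary A -> unitary B -> unitary (A *m B).
Proof.
rewrite /unitary => hA hB; by rewrite adjM mulmxA -(mulmxA (adj B)) hA mulmx1 hB.
Qed.

Lemma unitary_unit (U : M) : unitary U -> U \in unitmx.
Proof. by move=> h; case: (mulmx1_unit h). Qed.

Lemma unitary_inv (U : M) : unitary U -> invmx U = adj U.
Proof.
move=> h; have hu := unitary_unit h.
by rewrite -[RHS]mulmx1 -(mulmxV hu) mulmxA h mul1mx.
Qed.

Lemma unitary_r (U : M) : unitary U -> U *m adj U = 1%:M.
Proof. move=> h; exact: mulmx1C. Qed.

End Adj.

Section Pauli.
Variable n : nat.
Local Notation M := 'M[algC]_(2 ^ n).

Lemma adj_pX (q : 'I_n) : adj (pX q) = pX q.
Proof.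
apply/matrixP => x y; rewrite /adj !mxE rmorph_nat.
suff -> : (val y == flip q x) = (val x == flip q y) by [].
by apply/idP/idP => /eqP e; apply/eqP; rewrite e flipK.
Qed.

Lemma pX_sq (q : 'I_n) : pX q *m pX q = 1%:M.
Proof.
apply/matrixP => x y.
have hz : (flip q y < 2 ^ n)%N by apply: flip_lt.
pose z0 : 'I_(2 ^ n) := Ordinal hz.
rewrite !mxE (bigD1 z0) //= big1 ?addr0.
  by rewrite !mxE /= eqxx mulr1 flipK.
move=> z hz'; rewrite !mxE.
have -> : (val z == flip q y) = false.
  apply/negbTE; apply: contra hz' => /eqP e; apply/eqP; exact: val_inj.
by rewrite mulr0.
Qed.

Lemma adj_pZ (q : 'I_n) : adj (pZ q) = pZ q.
Proof.
apply/matrixP => x y; rewrite /adj !mxE rmorphM rmorph_nat rmorph_sign.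
case: (eqVneq x y) => [->|h]; first by [].
by rewrite !mul0r.
Qed.

Lemma pZ_sq (q : 'I_n) : pZ q *m pZ q = 1%:M.
Proof.
apply/matrixP => x y.
rewrite !mxE (bigD1 x) //= big1 ?addr0.
  by rewrite !mxE eqxx mul1r mulrCA -signr_addb addbb expr0 mulr1.
move=> z hz; rewrite !mxE eq_sym (negbTE hz); by rewrite !mul0r.
Qed.

Lemma unitary_pX (q : 'I_n) : unitary (pX q).
Proof. by rewrite /unitary adj_pX pX_sq. Qed.

Lemma unitary_pZ (q : 'I_n) : unitary (pZ q).
Proof. by rewrite /unitary adj_pZ pZ_sq. Qed.

Lemma unitary_paulimat (a b : {ffun 'I_n -> bool}) : unitary (paulimat a b).
Proof.
rewrite /paulimat; elim: (enum 'I_n) => [|q s IH] /=; first exact: unitary1.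
apply: unitaryM => //; apply: unitaryM.
  case: (a q); [exact: unitary_pX | exact: unitary1].
case: (b q); [exact: unitary_pZ | exact: unitary1].
Qed.

Lemma herm_sq (Sm : M) : hermitian_pauli Sm -> Sm *m Sm = 1%:M.
Proof.
case=> [[k [a [b ->]]] hadj].
rewrite -{2}hadj.
have hP := unitary_r (unitary_paulimat a b).
have hc : (('i : algC) ^+ k)^* = (- 'i) ^+ k by rewrite -conjCi rmorphXn.
rewrite adjZ -scalemxAr -scalemxAl hP scalerA hc -exprMn mulNr mulCii opprK.
by rewrite expr1n scale1r.
Qed.
End Pauli.

Section Comm.
Variable n : nat.
Local Notation M := 'M[algC]_(2 ^ n).

Lemma ord_bits_eq (x y : 'I_(2 ^ n)) : (forall r : 'I_n, bit r x = bit r y) -> x = y.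
Proof.
move=> h; apply: val_inj; apply: (bits_eq (ltn_ord x) (ltn_ord y)) => r hr.
exact: (h (Ordinal hr)).
Qed.

Definition mko (f : nat -> bool) : 'I_(2 ^ n) := Ordinal (mk_lt f n).

Lemma bit_mko f (r : 'I_n) : bit r (mko f) = f r.
Proof. by rewrite /mko /= bit_mk ltn_ord. Qed.

Lemma ord_bits_neq (x y : 'I_(2 ^ n)) : x != y -> exists r : 'I_n, bit r x != bit r y.
Proof.
move=> hxy; case: (boolP [exists r : 'I_n, bit r x != bit r y]) => [/existsP //|/existsPn hn].
exfalso; move/eqP: hxy; apply; apply: ord_bits_eq => r.
by have := hn r; rewrite negbK => /eqP.
Qed.

Lemma triv_eq (A : M) (P : pred 'I_n) : (forall q, P q -> trivial_on q A) ->
  forall x y x' y' : 'I_(2 ^ n),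
  (forall q, P q -> bit q x = bit q y) -> (forall q, P q -> bit q x' = bit q y') ->
  (forall q, ~~ P q -> bit q x = bit q x' /\ bit q y = bit q y') -> A x y = A x' y'.
Proof.
move=> hP.
suff H : forall k (x y x' y' : 'I_(2 ^ n)),
  (forall q, P q -> bit q x = bit q y) -> (forall q, P q -> bit q x' = bit q y') ->
  (forall q, ~~ P q -> bit q x = bit q x' /\ bit q y = bit q y') ->
  (forall q : 'I_n, (k <= q)%N -> bit q x = bit q x') -> A x y = A x' y'.
  move=> x y x' y' h1 h2 h3; apply: (H n) => // q hq.
  by have := ltn_ord q; rewrite ltnNge hq.
elim=> [|k IH] x y x' y' h1 h2 h3 h4.
  have ex : x = x' by apply: ord_bits_eq => q; exact: h4.
  have ey : y = y'.
    apply: ord_bits_eq => q; case hq: (P q); last exact: (h3 q (negbT hq)).2.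
    by rewrite -h1 // h4 // h2.
  by rewrite ex ey.
case: (ltnP k n) => hk; last first.
  apply: IH => // q hq; exfalso; have := ltn_ord q; lia.
pose q0 : 'I_n := Ordinal hk.
pose x1 := mko (fun r => if r == k then bit k x' else bit r x).
pose y1 := mko (fun r => if r == k then bit k y' else bit r y).
have bx1 : forall r : 'I_n, bit r x1 = if val r == k then bit k x' else bit r x.
  move=> r; exact: bit_mko.
have by1 : forall r : 'I_n, bit r y1 = if val r == k then bit k y' else bit r y.
  move=> r; exact: bit_mko.
transitivity (A x1 y1).
  case hPk: (P q0).
    have t := (hP q0 hPk x y).2; apply: t.
    - move=> r hr; rewrite bx1 ifF //; apply/negbTE; apply: contra hr => /eqP e.
      by apply/eqP; apply: val_inj.
    - move=> r hr; rewrite by1 ifF //; apply/negbTE; apply: contra hr => /eqP e.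
      by apply/eqP; apply: val_inj.
    - exact: h1.
    - by rewrite bx1 by1 /= eqxx; exact: (h2 q0 hPk).
  have [e1 e2] := h3 q0 (negbT hPk).
  have -> : x1 = x.
    apply: ord_bits_eq => r; rewrite bx1; case: eqP => // e.
    by have -> : r = q0 by apply: val_inj.
  have -> : y1 = y.
    apply: ord_bits_eq => r; rewrite by1; case: eqP => // e.
    by have -> : r = q0 by apply: val_inj.
  by [].
apply: IH => // q.
- move=> hq; rewrite bx1 by1; case: eqP => e; last exact: h1.
  rewrite -e; exact: h2.
- move=> hq; rewrite bx1 by1; case: eqP => e; last exact: h3.
  by rewrite -e.
- move=> hq; rewrite bx1; case: eqP => e; first by rewrite -e.
  apply: h4; rewrite ltn_neqAle hq andbT; apply/eqP => e'; apply: e; by rewrite e'.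
Qed.

Lemma disj_comm (A B : M) :
  (forall q, trivial_on q A \/ trivial_on q B) -> A *m B = B *m A.
Proof.
move=> h.
pose p := fun q : 'I_n => if excluded_middle_informative (trivial_on q A) then true else false.
have hpA : forall q, p q -> trivial_on q A.
  by move=> q; rewrite /p; case: excluded_middle_informative.
have hpB : forall q, ~~ p q -> trivial_on q B.
  move=> q; rewrite /p; case: excluded_middle_informative => // hn _; by case: (h q).
pose pn := fun r : nat => if @insub _ (fun r => (r < n)%N) 'I_n r is Some q then p q else false.
have hpn : forall q : 'I_n, pn q = p q by move=> q; rewrite /pn valK.
apply/matrixP => x z; rewrite !mxE.
pose y0 := mko (fun r => if pn r then bit r x else bit r z).
pose y1 := mko (fun r => if pn r then bit r z else bit r x).
have by0 : forall r : 'I_n, bit r y0 = if p r then bit r x else bit r z.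
  by move=> r; rewrite bit_mko hpn.
have by1 : forall r : 'I_n, bit r y1 = if p r then bit r z else bit r x.
  by move=> r; rewrite bit_mko hpn.
rewrite (bigD1 y0) //= big1 ?addr0; last first.
  move=> y hy; have [r hr] := ord_bits_neq hy; rewrite by0 in hr.
  case hp: (p r); rewrite hp in hr.
    have [t _] := hpA r hp x y; rewrite t ?mul0r //; by rewrite eq_sym.
  have [t _] := hpB r (negbT hp) y z; by rewrite t ?mulr0.
rewrite [RHS](bigD1 y1) //= big1 ?addr0; last first.
  move=> y hy; have [r hr] := ord_bits_neq hy; rewrite by1 in hr.
  case hp: (p r); rewrite hp in hr.
    have [t _] := hpA r hp y z; by rewrite t ?mulr0.
  have [t _] := hpB r (negbT hp) x y; rewrite t ?mul0r //; by rewrite eq_sym.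
rewrite mulrC; congr (_ * _).
  apply: (triv_eq (P := fun q => ~~ p q)) => // q hq.
  - by rewrite by0 (negbTE hq).
  - by rewrite by1 (negbTE hq).
  - by rewrite negbK in hq; rewrite by0 by1 hq.
apply: (triv_eq (P := p)) => // q hq.
- by rewrite by0 hq.
- by rewrite by1 hq.
- by rewrite by0 by1 (negbTE hq).
Qed.
End Comm.

Section Gen.
Variable n : nat.
Local Notation M := 'M[algC]_(2 ^ n).
Local Notation circ := (circuit n).

Fixpoint ev (c : circ) (k : nat) (gg : nat -> M -> M) (gm : nat -> nat -> M -> M) : M :=
  match c with
  | [::] => 1%:M
  | (l, Gate U) :: c' => ev c' k gg gm *m gg l U
  | (l, Meas Sm) :: c' => ev c' k.+1 gg gm *m gm k l Sm
  end.

Fixpoint evr (c : circ) (k : nat) (gm : nat -> nat -> M -> M) : M :=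
  match c with
  | [::] => 1%:M
  | (l, Gate U) :: c' => evr c' k gm
  | (l, Meas Sm) :: c' => gm k l Sm *m evr c' k.+1 gm
  end.

Fixpoint allm (c : circ) (k : nat) (P : nat -> nat -> M -> Prop) (Q : nat -> M -> Prop) : Prop :=
  match c with
  | [::] => True
  | (l, Gate U) :: c' => Q l U /\ allm c' k P Q
  | (l, Meas Sm) :: c' => P k l Sm /\ allm c' k.+1 P Q
  end.

Lemma allm_mono c k P Q P' Q' : allm c k P Q ->
  (forall j l Sm, P j l Sm -> P' j l Sm) -> (forall l U, Q l U -> Q' l U) -> allm c k P' Q'.
Proof.
elim: c k => [//|[l [U|Sm]] c IH] k /= [h1 h2] hP hQ; split; auto; exact: IH.
Qed.

Lemma allm_and c k P Q P' Q' : allm c k P Q -> allm c k P' Q' ->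
  allm c k (fun j l Sm => P j l Sm /\ P' j l Sm) (fun l U => Q l U /\ Q' l U).
Proof.
elim: c k => [//|[l [U|Sm]] c IH] k /= [h1 h2] [h3 h4]; split; auto.
Qed.

Lemma allm_true c k (P : nat -> nat -> M -> Prop) (Q : nat -> M -> Prop) :
  (forall j l Sm, P j l Sm) -> (forall l U, Q l U) -> allm c k P Q.
Proof. elim: c k => [//|[l [U|Sm]] c IH] k /= hP hQ; split; auto. Qed.

Lemma allm_idx c k : allm c k (fun j _ _ => (k <= j)%N) (fun _ _ => True).
Proof.
elim: c k => [//|[l [U|Sm]] c IH] k /=; split => //;
  apply: allm_mono (IH _) _ _ => // j _ _; exact: ltnW.
Qed.

Lemma allm_nth c k (R : nat * op n -> Prop) :
  (forall i, (i < size c)%N -> R (nth (dflt n) c i)) ->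
  allm c k (fun _ l Sm => R (l, Meas Sm)) (fun l U => R (l, Gate U)).
Proof.
elim: c k => [//|[l [U|Sm]] c IH] k /= h; split; first exact: (h 0%N).
- apply: IH => i hi; exact: (h i.+1).
- exact: (h 0%N).
- apply: IH => i hi; exact: (h i.+1).
Qed.

Lemma allm_all c k (P : pred nat) : all P (map fst c) ->
  allm c k (fun _ l _ => P l) (fun l _ => P l).
Proof.
elim: c k => [//|[l [U|Sm]] c IH] k /= /andP [h1 h2]; split => //; exact: IH.
Qed.

Lemma allm_meas c k (P : nat -> nat -> M -> Prop) :
  (forall i, (i < nmeas c)%N -> P (k + i)%N (mlev c i) (mop c i)) ->
  allm c k P (fun _ _ => True).
Proof.
elim: c k => [//|[l [U|Sm]] c IH] k /= h; split => //.
- exact: IH.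
- by have := h 0%N erefl; rewrite addn0.
- apply: IH => i hi; have := h i.+1 hi; by rewrite addnS addSn.
Qed.

Lemma ev_ext c k gg gm gg' gm' :
  allm c k (fun j l Sm => gm j l Sm = gm' j l Sm) (fun l U => gg l U = gg' l U) ->
  ev c k gg gm = ev c k gg' gm'.
Proof.
elim: c k => [//|[l [U|Sm]] c IH] k /= [h1 h2]; by rewrite (IH _ h2) h1.
Qed.

Lemma evr_ext c k gm gm' :
  allm c k (fun j l Sm => gm j l Sm = gm' j l Sm) (fun l U => True) ->
  evr c k gm = evr c k gm'.
Proof.
elim: c k => [//|[l [U|Sm]] c IH] k /= [h1 h2]; by rewrite (IH _ h2) ?h1.
Qed.

Lemma ev1 c k gg gm :
  allm c k (fun j l Sm => gm j l Sm = 1%:M) (fun l U => gg l U = 1%:M) ->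
  ev c k gg gm = 1%:M.
Proof.
elim: c k => [//|[l [U|Sm]] c IH] k /= [h1 h2]; by rewrite (IH _ h2) h1 mulmx1.
Qed.

Lemma evr1 c k gm :
  allm c k (fun j l Sm => gm j l Sm = 1%:M) (fun l U => True) ->
  evr c k gm = 1%:M.
Proof.
elim: c k => [//|[l [U|Sm]] c IH] k /= [h1 h2]; by rewrite (IH _ h2) ?h1 ?mul1mx.
Qed.




Lemma ev_unitary c k gg gm :
  allm c k (fun j l Sm => unitary (gm j l Sm)) (fun l U => unitary (gg l U)) ->
  unitary (ev c k gg gm).
Proof.
elim: c k => [|[l [U|Sm]] c IH] k /=; first by move=> _; exact: unitary1.
all: move=> [h1 h2]; apply: unitaryM => //; exact: IH.
Qed.

Lemma adj_ev_meas c k gm gm' :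
  allm c k (fun j l Sm => adj (gm j l Sm) = gm' j l Sm) (fun _ _ => True) ->
  adj (ev c k (fun _ _ => 1%:M) gm) = evr c k gm'.
Proof.
elim: c k => [|[l [U|Sm]] c IH] k /=; first by move=> _; exact: adj1.
all: move=> [h1 h2]; rewrite adjM (IH _ h2) ?h1 //.
by rewrite adj1 mul1mx.
Qed.

Definition Eg c k L (w : nat -> bool) :=
  ev c k (fun l U => if (L < l)%N then U else 1%:M)
         (fun j l Sm => if w j && (L < l)%N then Sm else 1%:M).
Definition Gl c k L :=
  ev c k (fun l U => if l == L then U else 1%:M) (fun _ _ _ => 1%:M).
Definition Mw c k L (w : nat -> bool) :=
  ev c k (fun _ _ => 1%:M) (fun j l Sm => if w j && (l == L) then Sm else 1%:M).

Fixpoint commc (c : circ) : Prop :=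
  match c with
  | [::] => True
  | x :: c' => (forall i, (i < size c')%N -> (nth (dflt n) c' i).1 = x.1 ->
        op_mat x.2 *m op_mat (nth (dflt n) c' i).2 = op_mat (nth (dflt n) c' i).2 *m op_mat x.2)
      /\ commc c'
  end.

Lemma comm_Mw c k L w (U : M) :
  allm c k (fun _ l' Sm => l' = L -> U *m Sm = Sm *m U) (fun _ _ => True) ->
  U *m Mw c k L w = Mw c k L w *m U.
Proof.
rewrite /Mw; elim: c k => [|[l [V|Sm]] c IH] k /=; first by rewrite mul1mx mulmx1.
all: move=> [h1 h2].
  by rewrite !mulmx1 IH.
rewrite mulmxA IH // -!mulmxA; congr (_ *m _).
case: (w k) => /=; last by rewrite mul1mx mulmx1.
case: (l =P L) => [e|_]; last by rewrite mul1mx mulmx1.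
exact: h1 e.
Qed.

Lemma sorted_cons (x : nat * op n) c :
  sorted leq (map fst (x :: c)) -> all (leq x.1) (map fst c) /\ sorted leq (map fst c).
Proof.
move=> /= h; split; first exact: (order_path_min leq_trans h).
exact: path_sorted h.
Qed.

Lemma ev_layer c k L w : sorted leq (map fst c) -> commc c ->
  Eg c k L w = Eg c k L.+1 w *m Gl c k L.+1 *m Mw c k L.+1 w.
Proof.
rewrite /Eg /Gl /Mw.
elim: c k => [|[l o] c IH] k; first by rewrite /= !mulmx1.
move=> /sorted_cons [hall hs] [hc1 hc2]; rewrite /= in hall.
have big1 : (L.+1 < l)%N ->
  [/\ ev c k (fun l U => if l == L.+1 then U else 1%:M) (fun _ _ _ => 1%:M) = 1%:M,
      ev c k.+1 (fun l U => if l == L.+1 then U else 1%:M) (fun _ _ _ => 1%:M) = 1%:M,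
      ev c k (fun _ _ => 1%:M) (fun j l Sm => if w j && (l == L.+1) then Sm else 1%:M) = 1%:M &
      ev c k.+1 (fun _ _ => 1%:M) (fun j l Sm => if w j && (l == L.+1) then Sm else 1%:M) = 1%:M].
  move=> hl; have ha := allm_all k hall; have hb := allm_all k.+1 hall.
  split; apply: ev1.
  - apply: allm_mono ha _ _ => //= l' U hl'; by rewrite gtn_eqF // (leq_trans hl hl').
  - apply: allm_mono hb _ _ => //= l' U hl'; by rewrite gtn_eqF // (leq_trans hl hl').
  - apply: allm_mono ha _ _ => //= j l' Sm hl'; by rewrite gtn_eqF ?andbF // (leq_trans hl hl').
  - apply: allm_mono hb _ _ => //= j l' Sm hl'; by rewrite gtn_eqF ?andbF // (leq_trans hl hl').
have ext1 : forall k', (L.+1 < l)%N ->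
  ev c k' (fun l U => if (L < l)%N then U else 1%:M)
         (fun j l Sm => if w j && (L < l)%N then Sm else 1%:M) =
  ev c k' (fun l U => if (L.+1 < l)%N then U else 1%:M)
         (fun j l Sm => if w j && (L.+1 < l)%N then Sm else 1%:M).
  move=> k' hl; apply: ev_ext; apply: allm_mono (allm_all k' hall) _ _ => /= [j l' Sm|l' U] hl'.
    by rewrite (ltnW (leq_trans hl hl')) (leq_trans hl hl').
  by rewrite (ltnW (leq_trans hl hl')) (leq_trans hl hl').
case: o hc1 => [U|Sm] /= hc1.
- rewrite (IH k hs hc2).
  case: (ltngtP L.+1 l) => hl.
  + have [e1 _ e2 _] := big1 hl.
    rewrite -(IH k hs hc2) (ext1 k hl) e1 e2 ?ifT ?(ltnW hl) // ?gtn_eqF //.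
    by rewrite !mulmx1.
  + by rewrite !mulmx1.
  + rewrite !mulmx1 -!mulmxA; congr (_ *m (_ *m _)); symmetry.
    apply: comm_Mw.
    have := allm_nth (R:=fun p : nat * op n => p.1 = l -> op_mat (Gate U) *m op_mat p.2 = op_mat p.2 *m op_mat (Gate U)) k hc1.
    move=> h; apply: allm_mono h _ _ => //= j l' Sm' h' e; apply: h'; by rewrite e.
- rewrite (IH k.+1 hs hc2).
  case: (ltngtP L.+1 l) => hl.
  + have [_ e1 _ e2] := big1 hl.
    rewrite -(IH k.+1 hs hc2) (ext1 k.+1 hl) e1 e2.
    by rewrite ?andbT ?andbF /= ?mulmx1 ?mul1mx.
  + by rewrite ?andbT ?andbF /= ?mulmx1 ?mul1mx.
  + by rewrite ?andbT ?andbF /= !mulmxA ?mulmx1 ?mul1mx.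
Qed.

Lemma ev_split c k L gg gm : sorted leq (map fst c) ->
  ev c k gg gm =
  ev c k (fun l U => if (L < l)%N then gg l U else 1%:M)
         (fun j l Sm => if (L < l)%N then gm j l Sm else 1%:M) *m
  ev c k (fun l U => if (l <= L)%N then gg l U else 1%:M)
         (fun j l Sm => if (l <= L)%N then gm j l Sm else 1%:M).
Proof.
elim: c k => [|[l o] c IH] k; first by rewrite /= mulmx1.
move=> /sorted_cons [hall hs]; rewrite /= in hall.
have hall' := fun k' => allm_all k' hall.
case: o => [U|Sm] /=.
- case: (leqP l L) => hl.
    by rewrite (IH k hs) mulmx1 mulmxA.
  rewrite mulmx1 (ev1 (c:=c) (k:=k) (gg:=fun l U => if (l <= L)%N then gg l U else 1%:M)); last first.
    apply: allm_mono (hall' k) _ _ => /= [j l' Sm h|l' U' h];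
      by rewrite leqNgt (leq_trans hl h).
  rewrite mulmx1; congr (_ *m _); apply: ev_ext.
  apply: allm_mono (hall' k) _ _ => /= [j l' Sm h|l' U' h];
    by rewrite (leq_trans hl h).
- case: (leqP l L) => hl.
    by rewrite (IH k.+1 hs) mulmx1 mulmxA.
  rewrite mulmx1 (ev1 (c:=c) (k:=k.+1) (gg:=fun l U => if (l <= L)%N then gg l U else 1%:M)); last first.
    apply: allm_mono (hall' k.+1) _ _ => /= [j l' Sm' h|l' U' h];
      by rewrite leqNgt (leq_trans hl h).
  rewrite mulmx1; congr (_ *m _); apply: ev_ext.
  apply: allm_mono (hall' k.+1) _ _ => /= [j l' Sm' h|l' U' h];
    by rewrite (leq_trans hl h).
Qed.

Lemma Ulev_Gl_aux c k L (acc : M) :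
  foldl (fun acc p => if p.2 is Gate U then (if p.1 == L then U *m acc else acc) else acc) acc c
  = Gl c k L *m acc.
Proof.
rewrite /Gl; elim: c k acc => [|[l [U|Sm]] c IH] k acc /=; first by rewrite mul1mx.
  rewrite (IH k) -mulmxA; congr (_ *m _); case: (l == L) => //; by rewrite mul1mx.
by rewrite (IH k.+1) mulmx1.
Qed.

Lemma Ulev_Gl c L : Ulev c L = Gl c 0 L.
Proof. by rewrite /Ulev (Ulev_Gl_aux c 0) mulmx1. Qed.

Lemma foldr_ext (T : Type) (f g : T -> M -> M) z s :
  (forall x acc, f x acc = g x acc) -> foldr f z s = foldr g z s.
Proof. move=> h; elim: s => //= x s ->; exact: h. Qed.

Lemma iota_evr c k (H : nat -> nat * M -> M) :
  foldr (fun i acc => H (k + i)%N (nth (0%N, 1%:M) (meas_list c) i) *m acc) 1%:M (iota 0 (nmeas c))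
  = evr c k (fun j l Sm => H j (l, Sm)).
Proof.
elim: c k => [|[l [U|Sm]] c IH] k //=.
rewrite addn0 -(IH k.+1); congr (_ *m _).
have -> : iota 1 (size (meas_list c)) = map (addn 1) (iota 0 (size (meas_list c))) by rewrite -iotaDl.
rewrite foldr_map; apply: foldr_ext => i acc /=.
by rewrite add0n addnA addn1.
Qed.

Lemma Fcomp_evr c (u : {ffun 'I_(nmeas c) -> bool}) K :
  Fcomp u K = evr c 0 (fun j l Sm => if bits_of u j && (l == K.+1) then Sm else 1%:M).
Proof.
rewrite /Fcomp.
pose H := fun j (p : nat * M) => if bits_of u j && (p.1 == K.+1) then p.2 else 1%:M.
rewrite -(iota_evr c 0 H) -val_enum_ord foldr_map.
apply: foldr_ext => j acc; by rewrite /H /= /bits_of valK.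
Qed.

Lemma kraus_ev c f k :
  kraus c f k = ev c k (fun _ U => U) (fun j _ Sm => proj (f j) Sm).
Proof. elim: c k => [|[l [U|Sm]] c IH] k //=; by rewrite IH. Qed.

Lemma ev_sign c k gg gm (b : nat -> nat) :
  ev c k gg (fun j l Sm => (-1) ^+ (b j) *: gm j l Sm) =
  (-1) ^+ (\sum_(k <= j < k + nmeas c) b j) *: ev c k gg gm.
Proof.
elim: c k => [|[l [U|Sm]] c IH] k /=.
- by rewrite addn0 big_geq // expr0 scale1r.
- by rewrite IH scalemxAl.
- rewrite IH -scalemxAl -scalemxAr scalerA.
  have -> : nmeas ((l, Meas Sm) :: c) = (nmeas c).+1 by [].
  rewrite (@big_ltn _ _ _ k); last by lia.
  have -> : (k + (nmeas c).+1 = k.+1 + nmeas c)%N by lia.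
  by rewrite exprD mulrC.
Qed.

Fixpoint allbits m : seq (seq bool) :=
  if m is m'.+1 then [seq false :: s | s <- allbits m'] ++ [seq true :: s | s <- allbits m']
  else [:: [::]].

Lemma allbits_size m s : s \in allbits m -> size s = m.
Proof.
elim: m s => [|m IH] s /=; first by rewrite inE => /eqP ->.
rewrite mem_cat => /orP [] /mapP [s' h ->] /=; by rewrite (IH _ h).
Qed.

Lemma ev_sum c k gg (G : nat -> nat -> M -> bool -> M) :
  \sum_(s <- allbits (nmeas c)) ev c k gg (fun j l Sm => G j l Sm (nth false s (j - k))) =
  ev c k gg (fun j l Sm => G j l Sm false + G j l Sm true).
Proof.
elim: c k => [|[l [U|Sm]] c IH] k /=.
- by rewrite big_seq1.
- by rewrite -mulmx_suml IH.
- rewrite big_cat !big_map /= mulmxDr.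
  have e : forall b s, ev c k.+1 gg (fun j l Sm => G j l Sm (nth false (b :: s) (j - k))) =
                       ev c k.+1 gg (fun j l Sm => G j l Sm (nth false s (j - k.+1))).
    move=> b s; apply: ev_ext; apply: allm_mono (allm_idx c k.+1) _ _ => // j l' Sm' h.
    by rewrite -(subnSK h).
  rewrite subnn /=.
  under eq_bigr do rewrite e.
  under [X in _ + X]eq_bigr do rewrite e.
  by rewrite -!mulmx_suml !IH.
Qed.
End Gen.

Section Main.
Variable n : nat.
Local Notation M := 'M[algC]_(2 ^ n).
Local Notation circ := (circuit n).

Lemma proj_sum (Sm : M) : proj false Sm + proj true Sm = 1%:M.
Proof.
rewrite /proj -scalerDr /= expr0 expr1 scale1r addrACA.
rewrite scaleNr scale1r addrN addr0 -mulr2n -scaler_nat scalerA mulVf ?scale1r //.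
by rewrite pnatr_eq0.
Qed.

Lemma proj_sign (Sm : M) b' b : Sm *m Sm = 1%:M ->
  (if b' then Sm else 1%:M) *m proj b Sm = (-1) ^+ (b' && b) *: proj b Sm.
Proof.
move=> hS; case: b' => /=; last by rewrite mul1mx expr0 scale1r.
rewrite /proj -scalemxAr mulmxDr mulmx1 -scalemxAr hS scalerA.
case: b => /=; rewrite ?expr0 ?expr1 ?scale1r ?mul1r ?mulr1.
  rewrite mulrC -scalerA; congr (_ *: _).
  by rewrite scalerDr scalerA mulrNN mulr1 scale1r addrC.
by rewrite addrC.
Qed.
End Main.

Section Main2.
Variable n : nat.
Local Notation M := 'M[algC]_(2 ^ n).
Local Notation circ := (circuit n).

Lemma commc_of (c : circ) :
  (forall i j, (i < j < size c)%N -> (nth (dflt n) c i).1 = (nth (dflt n) c j).1 ->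
     op_mat (nth (dflt n) c i).2 *m op_mat (nth (dflt n) c j).2 =
     op_mat (nth (dflt n) c j).2 *m op_mat (nth (dflt n) c i).2) -> commc c.
Proof.
elim: c => [//|x c IH] h /=; split.
  move=> i hi e; exact: (h 0%N i.+1 hi (esym e)).
apply: IH => i j hij e; exact: (h i.+1 j.+1 hij e).
Qed.

Lemma all_depth_aux (c : circ) B : (\max_(p <- c) p.1 <= B)%N -> all (fun l => l <= B)%N (map fst c).
Proof.
elim: c => //= x c IH; rewrite big_cons geq_max => /andP [h1 h2]; rewrite h1 /=; exact: IH.
Qed.

Lemma bigmin_le (I : eqType) (r : seq I) (P : pred I) (F : I -> nat) x0 i :
  i \in r -> P i -> (\big[minn/x0]_(j <- r | P j) F j <= F i)%N.
Proof.
elim: r => //= j r IH; rewrite inE big_cons => /orP [/eqP ->|hi] hP.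
  rewrite hP; exact: geq_minl.
case: (P j); last exact: IH.
exact: leq_trans (geq_minr _ _) (IH hi hP).
Qed.

Lemma unitary_herm (Sm : M) : Sm *m Sm = 1%:M -> adj Sm = Sm -> unitary Sm.
Proof. by move=> h1 h2; rewrite /unitary h2. Qed.

Lemma main_lemma (c : circ) (Hwf : wf_circuit c)
  (u : {ffun 'I_(nmeas c) -> bool}) (Hperp : in_perp (@outcome_code n c) u)
  (l : nat) (Hl : (l <= depth c)%N)
  (Hcase : (l < lev_min u)%N \/ (lev_max u <= l)%N) :
  back_cumulant u l = 1%:M.
Proof.
case: Hwf => hlev hsort hdisj hops.
have hallops : forall k, allm c k (fun _ _ Sm => hermitian_pauli Sm) (fun _ U => clifford U).
  move=> k; have := allm_nth (R := fun p : nat * op n => match p.2 with Gate U => clifford U | Meas Sm => hermitian_pauli Sm end) k hops.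
  by move=> h; apply: allm_mono h _ _.
have hsq : forall k, allm c k (fun _ _ Sm => Sm *m Sm = 1%:M /\ adj Sm = Sm) (fun _ U => unitary U).
  move=> k; apply: allm_mono (hallops k) _ _ => [j l' Sm h|l' U [h _]] //; split; [exact: herm_sq | by case: h].
have hcomm : commc c.
  apply: commc_of => i j hij e; apply: disj_comm; exact: (hdisj i j hij e).
have hdep : forall k, allm c k (fun _ l' _ => (l' <= depth c)%N) (fun l' _ => (l' <= depth c)%N).
  move=> k; exact: (allm_all k (all_depth_aux (leqnn _))).
have hU : forall (fb : nat -> bool) (fm : nat -> nat -> bool) k,
    unitary (ev c k (fun l' U => if fb l' then U else 1%:M) (fun j l' Sm => if fm j l' then Sm else 1%:M)).
  move=> fb fm k; apply: ev_unitary; apply: allm_mono (hsq k) _ _ => [j l' Sm [h1 h2]|l' U h].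
    case: (fm j l') => //; [exact: unitary_herm | exact: unitary1].
  case: (fb l') => //; exact: unitary1.
have TV : ev c 0 (fun _ U => U) (fun j _ Sm => if bits_of u j then Sm else 1%:M)
        = ev c 0 (fun _ U => U) (fun _ _ _ => 1%:M).
  have e1 : ev c 0 (fun _ U => U) (fun j _ Sm => if bits_of u j then Sm else 1%:M) =
     \sum_(s <- allbits (nmeas c)) ev c 0 (fun _ U => U)
       (fun j l Sm => (fun j l Sm b => (if bits_of u j then Sm else 1%:M) *m proj b Sm) j l Sm (nth false s (j - 0))).
    rewrite (ev_sum c 0 (fun _ U => U) (fun j l Sm b => (if bits_of u j then Sm else 1%:M) *m proj b Sm)); apply: ev_ext; apply: allm_true => // j l' Sm.
    by rewrite -mulmxDr proj_sum mulmx1.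
  have e2 : ev c 0 (fun _ U => U) (fun _ _ _ => 1%:M) =
     \sum_(s <- allbits (nmeas c)) ev c 0 (fun _ U => U)
       (fun j l Sm => (fun j l Sm b => proj b Sm) j l Sm (nth false s (j - 0))).
    rewrite (ev_sum c 0 (fun _ U => U) (fun j l Sm b => proj b Sm)); apply: ev_ext; apply: allm_true => // j l' Sm; by rewrite proj_sum.
  rewrite e1 e2; apply: eq_big_seq => s hs /=.
  have hsz := allbits_size hs.
  rewrite (ev_ext (gg' := fun _ U => U) (gm' := fun j l Sm => (-1) ^+ (bits_of u j && nth false s (j - 0)) *: proj (nth false s (j - 0)) Sm)); last first.
    apply: allm_mono (hsq 0%N) _ _ => // j l' Sm [h _]; exact: proj_sign.
  rewrite (ev_sign c 0 (fun _ U => U) (fun j l Sm => proj (nth false s (j - 0)) Sm)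
             (fun j => (bits_of u j && nth false s (j - 0)) : nat)).
  set K := ev c 0 _ _.
  have [->|hK] := eqVneq K 0; first by rewrite scaler0.
  pose o : {ffun 'I_(nmeas c) -> bool} := [ffun i : 'I_(nmeas c) => nth false s i].
  have ho : outcome_code o.
    case: (boolP [exists i : 'I_(2 ^ n), [exists j : 'I_(2 ^ n), K i j != 0]]) => [/existsP [i /existsP [j hij]]|/existsPn hn]; last first.
      exfalso; move/eqP: hK; apply; apply/matrixP => i j; rewrite mxE.
      by move: (hn i) => /existsPn /(_ j); rewrite negbK => /eqP.
    exists (delta_mx j 0).
    have -> : kraus c (bits_of o) 0 = K.
      rewrite kraus_ev; apply: ev_ext; apply: allm_true => // j' l' Sm.
      rewrite subn0 /bits_of; case: insubP => [i' _ <-|hj]; first by rewrite ffunE.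
      by rewrite nth_default // hsz leqNgt.
    rewrite -colE; apply/negP => /eqP/matrixP h; have := h i 0; rewrite !mxE => e.
    by rewrite e eqxx in hij.
  have hb := Hperp o ho; rewrite /bdot in hb.
  have -> : (\sum_(0 <= j < 0 + nmeas c) (bits_of u j && nth false s (j - 0)))%N
            = (\sum_(i < nmeas c) (u i && o i))%N.
    rewrite add0n big_mkord; apply: eq_bigr => i _; by rewrite subn0 /bits_of valK ffunE.
  by rewrite -signr_odd hb expr0 scale1r.
have hm : allm c 0 (fun j l' Sm => bits_of u j -> (lev_min u <= l' <= lev_max u)%N) (fun _ _ => True).
  apply: allm_meas => i hi; rewrite add0n /bits_of.
  case: insubP => [i' _ ei|]; last by rewrite hi.
  move=> hu; rewrite -ei; apply/andP; split.
    by apply: bigmin_le => //; exact: mem_index_enum.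
  rewrite /lev_max; exact: (@leq_bigmax_cond _ (fun j => u j) (fun j : 'I_(nmeas c) => mlev c j) i' hu).
have hEq : Eg c 0 l (bits_of u) = Eg c 0 l (fun _ => false).
  case: Hcase => hc.
  - rewrite (@ev_split n c 0 l _ _ hsort) in TV.
    rewrite [X in _ = X](@ev_split n c 0 l _ _ hsort) in TV.
    have eA : forall w', ev c 0 (fun l' U => if (l < l')%N then U else 1%:M)
        (fun j l' Sm => if (l < l')%N then (if w' j then Sm else 1%:M) else 1%:M) = Eg c 0 l w'.
      move=> w'; apply: ev_ext; apply: allm_true => // j l' Sm; by case: (w' j); case: (l < l')%N.
    have eA' : ev c 0 (fun l' U => if (l < l')%N then U else 1%:M)
        (fun j l' Sm => if (l < l')%N then 1%:M else 1%:M) = Eg c 0 l (fun _ => false).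
      apply: ev_ext; apply: allm_true => // j l' Sm; by case: (l < l')%N.
    rewrite eA eA' in TV.
    have eL : ev c 0 (fun l' U => if (l' <= l)%N then U else 1%:M)
        (fun j l' Sm => if (l' <= l)%N then (if bits_of u j then Sm else 1%:M) else 1%:M) =
        ev c 0 (fun l' U => if (l' <= l)%N then U else 1%:M)
        (fun j l' Sm => if (l' <= l)%N then 1%:M else 1%:M).
      apply: ev_ext; apply: allm_mono hm _ _ => // j l' Sm h.
      case hw: (bits_of u j) => //; have /andP [h1 _] := h hw.
      by rewrite leqNgt (leq_trans hc h1).
    rewrite eL in TV.
    have hu' : unitary (ev c 0 (fun l' U => if (l' <= l)%N then U else 1%:M)
        (fun j l' Sm => if (l' <= l)%N then 1%:M else 1%:M)).
      apply: ev_unitary; apply: allm_mono (hsq 0%N) _ _ => [j l' Sm _|l' U h].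
        by case: (l' <= l)%N; exact: unitary1.
      by case: (l' <= l)%N => //; exact: unitary1.
    have := congr1 (fun X => X *m adj (ev c 0 (fun l' U => if (l' <= l)%N then U else 1%:M)
        (fun j l' Sm => if (l' <= l)%N then 1%:M else 1%:M))) TV.
    by rewrite /= -!mulmxA !unitary_r // !mulmx1.
  - apply: ev_ext; apply: allm_mono hm _ _ => // j l' Sm h.
    case hw: (bits_of u j) => //=; have /andP [_ h2] := h hw.
    by rewrite ltnNge (leq_trans h2 hc).
have hbc : forall d, (d <= depth c)%N -> bc_aux u d =
    adj (Eg c 0 (depth c - d) (bits_of u)) *m Eg c 0 (depth c - d) (fun _ => false).
  elim => [|d IH] hd.
    rewrite subn0 /= Fcomp_evr evr1; last first.
      apply: allm_mono (hdep 0%N) _ _ => // j l' Sm h.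
      by rewrite (ltn_eqF (h : (l' < (depth c).+1)%N)) andbF.
    have e1 : forall w', Eg c 0 (depth c) w' = 1%:M.
      move=> w'; apply: ev1; apply: allm_mono (hdep 0%N) _ _ => [j l' Sm h|l' U h].
        by rewrite ltnNge h andbF.
      by rewrite ltnNge h.
    by rewrite !e1 adj1 mul1mx.
  rewrite /= IH ?(ltnW hd) //.
  have eL : (depth c - d = (depth c - d.+1).+1)%N by lia.
  rewrite eL Ulev_Gl Fcomp_evr.
  set L := (depth c - d.+1)%N.
  rewrite (ev_layer 0 L (bits_of u) hsort hcomm) (ev_layer 0 L (fun _ => false) hsort hcomm).
  have -> : Mw c 0 L.+1 (fun _ => false) = 1%:M by apply: ev1; apply: allm_true.
  have hG : unitary (Gl c 0 L.+1).
    exact: (hU (fun l' => l' == L.+1) (fun _ _ => false) 0%N).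
  rewrite !adjM -(unitary_inv hG).
  rewrite (adj_ev_meas (gm' := fun j l' Sm => if bits_of u j && (l' == L.+1) then Sm else 1%:M)); last first.
    apply: allm_mono (hsq 0%N) _ _ => // j l' Sm [_ h].
    by case: (bits_of u j && (l' == L.+1)) => //; exact: adj1.
  by rewrite mulmx1 !mulmxA.
rewrite /back_cumulant hbc ?leq_subr // subKn // hEq.
exact: (hU (fun l' => (l < l')%N) (fun _ _ => false) 0%N).
Qed.
End Main2.

Theorem mainTheorem20 (n : nat) (c : circuit n) (Hwf : wf_circuit c)
  (Hlin : linear_code (@outcome_code n c))
  (u : {ffun 'I_(nmeas c) -> bool}) (Hperp : in_perp (@outcome_code n c) u)
  (Hnz : u != [ffun => false])
  (l : nat) (Hl : (l <= depth c)%N)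
  (Hcase : (l < lev_min u)%N \/ (lev_max u <= l)%N) :
  is_identity_mod_phase (back_cumulant u l).
Proof.
exists 1; exact: (main_lemma Hwf Hperp Hl Hcase).
Qed.
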